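(* Let $f:\mathbb{R}^d\to\mathbb{R}$, let $\widetilde{Q}:\mathbb{R}^d\times\mathbb{R}^m\to\mathbb{R}^d$, $(\mathbf{x},\mathbf{c})\mapsto \widetilde{Q}_{\mathbf{c}}(\mathbf{x})$, let $R:\mathbb{R}^d\times\mathbb{R}^m\to\mathbb{R}$, let $\lambda\in\mathbb{R}$, and set $$F_\lambda(\mathbf{x},\mathbf{c}) := f(\mathbf{x})+f(\widetilde{Q}_{\mathbf{c}}(\mathbf{x}))+\lambda R(\mathbf{x},\mathbf{c}).$$ Assume (A.1)–(A.5) below. Run the alternating proximal algorithm described below for $T$ iterations with step sizes $$\eta_1=\frac{1}{2(L+GL_{Q_1}+G_{Q_1}Ll_{Q_1})},\qquad \eta_2=\frac{1}{2(GL_{Q_2}+G_{Q_2}Ll_{Q_2})}.$$ For $t\in\{0,\dots,T-1\}$ define $$\mathbf{G}^t:=\big[\nabla_{\mathbf{x}}F_\lambda(\mathbf{x}^{t+1},\mathbf{c}^t)^T,\ \nabla_{\mathbf{c}}F_\lambda(\mathbf{x}^{t+1},\mathbf{c}^{t+1})^T\big]^T,$$ and let $L_{\min}=\min\{1/\eta_1,1/\eta_2\}$, $L_{\max}=\max\{1/\eta_1,1/\eta_2\}$. Then $$\frac{1}{T}\sum_{t=0}^{T-1}\|\mathbf{G}^t\|_2^2=\mathcal{O}\!\left(\frac{L_{\max}^2\big(F_\lambda(\mathbf{x}^0,\mathbf{c}^0)-F_\lambda(\mathbf{x}^T,\mathbf{c}^T)\big)}{L_{\min}T}\right),$$ where the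 implied constant is an absolute numerical constant.
   Context: Standing assumptions: $f$, $\widetilde{Q}$ and $R$ are differentiable, and the proximal minimizations below attain their minima. For a function $\phi$ and $\eta>0$, $\mathrm{prox}_{\eta\phi}(\mathbf{y}) := \arg\min_{\mathbf{u}}\{\frac{1}{2\eta}\|\mathbf{u}-\mathbf{y}\|_2^2+\phi(\mathbf{u})\}$. Algorithm: start from arbitrary $\mathbf{x}^0\in\mathbb{R}^d,\mathbf{c}^0\in\mathbb{R}^m$. For $t=0,\dots,T-1$: $\mathbf{g}^t=\nabla f(\mathbf{x}^t)+\nabla_{\mathbf{x}}\big[f(\widetilde{Q}_{\mathbf{c}}(\mathbf{x}))\big]_{(\mathbf{x},\mathbf{c})=(\mathbf{x}^t,\mathbf{c}^t)}$; $\mathbf{x}^{t+1}=\arg\min_{\mathbf{x}}\{\frac{1}{2\eta_1}\|\mathbf{x}-(\mathbf{x}^t-\eta_1\mathbf{g}^t)\|^2+\lambda R(\mathbf{x},\mathbf{c}^t)\}$; $\mathbf{h}^t=\nabla_{\mathbf{c}}\big[f(\widetilde{Q}_{\mathbf{c}}(\mathbf{x}^{t+1}))\big]_{\mathbf{c}=\mathbf{c}^t}$; $\mathbf{c}^{t+1}=\arg\min_{\mathbf{c}}\{\frac{1}{2\eta_2}\|\mathbf{c}-(\mathbf{c}^t-\eta_2\mathbf{h}^t)\|^2+\lambda R(\mathbf{x}^{t+1},\mathbf{c})\}$. Assumptions: (A.1) $f(\mathbf{x})>-\infty$ for all $\mathbf{x}$. (A.2) $f$ is $L$-smooth: $f(\mathbf{y})\le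 f(\mathbf{x})+\langle\nabla f(\mathbf{x}),\mathbf{y}-\mathbf{x}\rangle+\frac{L}{2}\|\mathbf{y}-\mathbf{x}\|^2$ for all $\mathbf{x},\mathbf{y}$. (A.3) $\|\nabla f(\mathbf{x})\|_2\le G$ for all $\mathbf{x}$. (A.4) For every fixed $\mathbf{c}$, $\mathbf{x}\mapsto\widetilde{Q}_{\mathbf{c}}(\mathbf{x})$ is $l_{Q_1}$-Lipschitz and its Jacobian $\nabla_{\mathbf{x}}\widetilde{Q}_{\mathbf{c}}(\mathbf{x})$ is $L_{Q_1}$-Lipschitz in $\mathbf{x}$; for every fixed $\mathbf{x}$, $\mathbf{c}\mapsto\widetilde{Q}_{\mathbf{c}}(\mathbf{x})$ is $l_{Q_2}$-Lipschitz and its Jacobian $\nabla_{\mathbf{c}}\widetilde{Q}_{\mathbf{c}}(\mathbf{x})$ is $L_{Q_2}$-Lipschitz in $\mathbf{c}$. (A.5) $\|\nabla_{\mathbf{x}}\widetilde{Q}_{\mathbf{c}}(\mathbf{x})\|_F\le G_{Q_1}$ and $\|\nabla_{\mathbf{c}}\widetilde{Q}_{\mathbf{c}}(\mathbf{x})\|_F\le G_{Q_2}$ for all $\mathbf{x},\mathbf{c}$ (Frobenius norms of the partial Jacobians). *)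

(* Defs.v *)
From HB Require Import structures.
From mathcomp Require Import all_boot all_order all_algebra.
From mathcomp Require Import all_classical all_reals all_analysis.
Set Implicit Arguments. Unset Strict Implicit. Unset Printing Implicit Defensive.
Import Order.TTheory GRing.Theory Num.Theory.
Import numFieldNormedType.Exports.
Local Open Scope ring_scope.

Section Defs.
Variable R : realType.

Definition sqnorm2 {n : nat} (v : 'rV[R]_n) : R := \sum_(i < n) (v 0 i) ^+ 2.
Definition norm2 {n : nat} (v : 'rV[R]_n) : R := Num.sqrt (sqnorm2 v).
Definition dotp {n : nat} (u v : 'rV[R]_n) : R := \sum_(i < n) u 0 i * v 0 i.
Definition frob {p q : nat} (A : 'M[R]_(p, q)) : R :=
  Num.sqrt (\sum_(i < p) \sum_(j < q) (A i j) ^+ 2).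

Definition grad {n : nat} (phi : 'rV[R]_n -> R) (x : 'rV[R]_n) : 'rV[R]_n :=
  \row_(i < n) ('d phi x (delta_mx 0 i : 'rV[R]_n)).

(* Jacobian of g : R^n -> R^k at x; entry (i, j) = d g_j / d x_i *)
Definition jac {n k : nat} (g : 'rV[R]_n -> 'rV[R]_k) (x : 'rV[R]_n)
  : 'M[R]_(n, k) :=
  \matrix_(i < n, j < k) ('d g x (delta_mx 0 i : 'rV[R]_n)) 0 j.

Definition is_prox {n : nat} (eta : R) (phi : 'rV[R]_n -> R) (y u : 'rV[R]_n) :=
  forall v : 'rV[R]_n,
    1 / (2 * eta) * sqnorm2 (u - y) + phi u <= 1 / (2 * eta) * sqnorm2 (v - y) + phi v.

Definition L_smooth {n : nat} (L : R) (f : 'rV[R]_n -> R) :=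
  (forall x y, norm2 (grad f x - grad f y) <= L * norm2 (x - y)) /\
  (forall x y, f y <= f x + dotp (grad f x) (y - x) + L / 2 * (norm2 (y - x)) ^+ 2).

Definition F_lam {d m : nat} (f : 'rV[R]_d -> R) (Q : 'rV[R]_d -> 'rV[R]_m -> 'rV[R]_d)
  (Rg : 'rV[R]_d -> 'rV[R]_m -> R) (lam : R) (x : 'rV[R]_d) (c : 'rV[R]_m) : R :=
  f x + f (Q x c) + lam * Rg x c.

End Defs.

(* Main.v *)
Require Import Defs.
From HB Require Import structures.
From mathcomp Require Import all_boot all_order all_algebra.
From mathcomp Require Import all_classical all_reals all_analysis.
From mathcomp Require Import ring lra.
Import Order.TTheory GRing.Theory Num.Theory.
Import numFieldNormedType.Exports.
Local Open Scope ring_scope.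

Set Implicit Arguments. Unset Strict Implicit. Unset Printing Implicit Defensive.
Local Open Scope classical_set_scope.

Section Alg.
Variable R : realType.
Variable n : nat.
Implicit Types u v w : 'rV[R]_n.

Lemma sqnorm2_ge0 v : 0 <= sqnorm2 v.
Proof. by apply: sumr_ge0 => i _; apply: sqr_ge0. Qed.

Lemma norm2_ge0 v : 0 <= norm2 v.
Proof. exact: sqrtr_ge0. Qed.

Lemma norm2_sq v : norm2 v ^+ 2 = sqnorm2 v.
Proof. by rewrite /norm2 sqr_sqrtr // sqnorm2_ge0. Qed.

Lemma dotpC u v : dotp u v = dotp v u.
Proof. by apply: eq_bigr => i _; rewrite mulrC. Qed.

Lemma dotpDl u v w : dotp (u + v) w = dotp u w + dotp v w.
Proof. by rewrite /dotp -big_split; apply: eq_bigr => i _; rewrite !mxE mulrDl. Qed.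

Lemma dotpZl a u v : dotp (a *: u) v = a * dotp u v.
Proof. by rewrite /dotp mulr_sumr; apply: eq_bigr => i _; rewrite !mxE mulrA. Qed.

Lemma dotpNl u v : dotp (- u) v = - dotp u v.
Proof. by rewrite -scaleN1r dotpZl mulN1r. Qed.

Lemma dotpBl u v w : dotp (u - v) w = dotp u w - dotp v w.
Proof. by rewrite dotpDl dotpNl. Qed.

Lemma dotpDr u v w : dotp w (u + v) = dotp w u + dotp w v.
Proof. by rewrite dotpC dotpDl !(dotpC w). Qed.

Lemma dotpZr a u v : dotp v (a *: u) = a * dotp v u.
Proof. by rewrite dotpC dotpZl dotpC. Qed.

Lemma dotpBr u v w : dotp w (u - v) = dotp w u - dotp w v.
Proof. by rewrite dotpC dotpBl !(dotpC w). Qed.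

Lemma dotpNr u v : dotp v (- u) = - dotp v u.
Proof. by rewrite dotpC dotpNl dotpC. Qed.

Lemma dotpvv v : dotp v v = sqnorm2 v.
Proof. by apply: eq_bigr => i _; rewrite expr2. Qed.

Lemma sqnorm2D u v : sqnorm2 (u + v) = sqnorm2 u + 2 * dotp u v + sqnorm2 v.
Proof.
rewrite -!dotpvv dotpDl !dotpDr (dotpC v u); ring.
Qed.

Lemma sqnorm2Z a v : sqnorm2 (a *: v) = a ^+ 2 * sqnorm2 v.
Proof. by rewrite -!dotpvv dotpZl dotpZr mulrA expr2. Qed.

Lemma sqnorm2N v : sqnorm2 (- v) = sqnorm2 v.
Proof. by rewrite -scaleN1r sqnorm2Z sqrrN expr1n mul1r. Qed.

Lemma sqnorm2_eq0 v : sqnorm2 v = 0 -> forall i, v 0 i = 0.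
Proof.
move=> /eqP; rewrite psumr_eq0; last by move=> i _; apply: sqr_ge0.
by move=> /allP H i; apply/eqP; rewrite -sqrf_eq0; apply: H; rewrite mem_index_enum.
Qed.

Lemma dotp_eq0 u v : sqnorm2 u = 0 -> dotp u v = 0.
Proof. by move=> /sqnorm2_eq0 H; apply: big1 => i _; rewrite H mul0r. Qed.

Lemma CS u v : dotp u v <= norm2 u * norm2 v.
Proof.
have [a0|a0] := eqVneq (norm2 u) 0.
  rewrite a0 mul0r dotp_eq0 // -norm2_sq a0 expr0n //.
have [b0|b0] := eqVneq (norm2 v) 0.
  rewrite b0 mulr0 dotpC dotp_eq0 // -norm2_sq b0 expr0n //.
have ha : 0 < norm2 u by rewrite lt_def a0 norm2_ge0.
have hb : 0 < norm2 v by rewrite lt_def b0 norm2_ge0.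
have H := sqnorm2_ge0 (norm2 v *: u - norm2 u *: v).
rewrite sqnorm2D sqnorm2N !sqnorm2Z dotpZl dotpNr dotpZr -!norm2_sq in H.
set a := norm2 u in ha H *; set b := norm2 v in hb H *; set D := dotp u v in H *.
have hab : 0 < a * b by apply: mulr_gt0.
have : 0 <= (a * b) * (a * b - D) by nra.
by rewrite pmulr_rge0 // subr_ge0.
Qed.

Lemma CSsq (u v : 'rV[R]_n) : dotp u v ^+ 2 <= sqnorm2 u * sqnorm2 v.
Proof.
have h1 := CS u v; have h2 := CS (- u) v.
rewrite dotpNl /norm2 sqnorm2N in h2; rewrite /norm2 in h1.
have hu := sqrtr_ge0 (sqnorm2 u); have hv := sqrtr_ge0 (sqnorm2 v).
rewrite -(sqr_sqrtr (sqnorm2_ge0 u)) -(sqr_sqrtr (sqnorm2_ge0 v)).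
set a := Num.sqrt (sqnorm2 u) in h1 h2 hu *; set b := Num.sqrt (sqnorm2 v) in h1 h2 hv *.
have h3 : 0 <= (a * b - dotp u v) * (a * b + dotp u v).
  by apply: mulr_ge0; lra.
nra.
Qed.

Lemma norm2_triangle u v : norm2 (u + v) <= norm2 u + norm2 v.
Proof.
have hu := norm2_ge0 u; have hv := norm2_ge0 v.
rewrite -ler_sqr ?nnegrE ?addr_ge0 ?norm2_ge0 //.
rewrite norm2_sq sqnorm2D -!norm2_sq; have := CS u v; nra.
Qed.

Lemma norm2Z a v : norm2 (a *: v) = `|a| * norm2 v.
Proof. by rewrite /norm2 sqnorm2Z sqrtrM ?sqr_ge0 // sqrtr_sqr. Qed.

Lemma norm2N v : norm2 (- v) = norm2 v.
Proof. by rewrite /norm2 sqnorm2N. Qed.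

Lemma norm2B u v : norm2 (u - v) = norm2 (v - u).
Proof. by rewrite -norm2N opprB. Qed.

End Alg.

Section MV.
Variable R : realType.

Definition mv n k (M : 'M[R]_(n, k)) (g : 'rV[R]_k) : 'rV[R]_n :=
  \row_i \sum_j M i j * g 0 j.

Lemma frob_ge0 n k (M : 'M[R]_(n, k)) : 0 <= frob M.
Proof. exact: sqrtr_ge0. Qed.

Lemma mv_sq n k (M : 'M[R]_(n, k)) g :
  sqnorm2 (mv M g) <= (\sum_(i < n) \sum_(j < k) (M i j) ^+ 2) * sqnorm2 g.
Proof.
rewrite /sqnorm2 mulr_suml; apply: ler_sum => i _.
have := CSsq (row i M) g.
rewrite /dotp /sqnorm2 !mxE.
under eq_bigr do rewrite mxE.
under [X in _ <= X * _ -> _]eq_bigr do rewrite mxE.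
by [].
Qed.

Lemma mv_norm n k (M : 'M[R]_(n, k)) g : norm2 (mv M g) <= frob M * norm2 g.
Proof.
rewrite /norm2 /frob -sqrtrM; last by apply: sumr_ge0 => i _; apply: sumr_ge0 => j _; apply: sqr_ge0.
rewrite ler_sqrt ?mv_sq //.
apply: mulr_ge0; last exact: sqnorm2_ge0.
by apply: sumr_ge0 => i _; apply: sumr_ge0 => j _; apply: sqr_ge0.
Qed.

Lemma mvBl n k (M M' : 'M[R]_(n, k)) g : mv (M - M') g = mv M g - mv M' g.
Proof.
apply/rowP => i; rewrite !mxE -sumrB; apply: eq_bigr => j _.
by rewrite !mxE mulrBl.
Qed.

Lemma mvBr n k (M : 'M[R]_(n, k)) g g' : mv M (g - g') = mv M g - mv M g'.
Proof.
apply/rowP => i; rewrite !mxE -sumrB; apply: eq_bigr => j _.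
by rewrite !mxE mulrBr.
Qed.

End MV.


Section Calc.
Variable R : realType.

Lemma quad_derive (c0 c1 c2 s : R) :
  is_derive s 1 (fun t : R => c0 + c1 * t + c2 * t ^+ 2) (c1 + 2 * c2 * s).
Proof.
have H1 : is_derive s (1:R) (fun t : R => t) 1 by apply: is_derive_id.
have H2 := is_deriveM H1 H1.
have H3 := is_deriveZ c2 H2.
have H4 := is_deriveZ c1 H1.
have H5 := is_deriveD (is_deriveD (is_derive_cst c0 s 1) H4) H3.
have -> : (fun t : R => c0 + c1 * t + c2 * t ^+ 2) =
   (cst c0 + c1 \*: (fun t : R => t)) + c2 \*: ((fun t : R => t) * (fun t : R => t)).
  by rewrite funeqE => t /=; rewrite expr2.
have E : (0 + c1%:A + c2 *: (s%:A + s%:A)) = c1 + 2 * c2 * s.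
  rewrite /GRing.scale /= !mulr1 add0r; ring.
rewrite -E; exact: H5.
Qed.

Lemma line_diff n (p w : 'rV[R]_n) (s : R) :
  differentiable (fun t : R => p + t *: w) s /\
  'd (fun t : R => p + t *: w) s = (fun t : R => t *: w) :> (R -> _).
Proof.
have H0 := is_diffD (is_diff_cst p s) (is_diff_scalel s w).
have H : is_diff s (fun t : R => p + t *: w) (fun t : R => t *: w).
  by move: H0; rewrite add0r.
split; first exact: ex_diff.
by rewrite diff_val.
Qed.

Lemma line_derive n (h : 'rV[R]_n -> R) (p w : 'rV[R]_n) (s : R) :
  differentiable h (p + s *: w) ->
  is_derive s 1 (fun t : R => h (p + t *: w)) ('d h (p + s *: w) w).
Proof.
move=> dh; have [dl ddl] := line_diff p w s.
have dc : differentiable (h \o (fun t : R => p + t *: w)) s.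
  by apply: differentiable_comp.
apply: DeriveDef; first exact: diff_derivable.
rewrite deriveE // diff_comp // ddl /= scale1r //.
Qed.

Lemma diff_dotp n (h : 'rV[R]_n -> R) p w : 'd h p w = dotp (grad h p) w.
Proof.
rewrite {1}(row_sum_delta w) linear_sum /dotp; apply: eq_bigr => i _.
by rewrite linearZ /grad mxE mulrC.
Qed.

Lemma dotp_delta n (v : 'rV[R]_n) i : dotp v (delta_mx 0 i) = v 0 i.
Proof.
rewrite /dotp (bigD1 i) //= big1 ?addr0; first by rewrite mxE !eqxx mulr1.
by move=> j ji; rewrite mxE (negbTE ji) andbF mulr0.
Qed.

End Calc.


Section Desc.
Variable R : realType.

Lemma descent n (h : 'rV[R]_n -> R) (K : R) :
  (forall x, differentiable h x) -> 0 <= K ->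
  (forall x y, norm2 (grad h x - grad h y) <= K * norm2 (x - y)) ->
  forall x y, h y <= h x + dotp (grad h x) (y - x) + K / 2 * sqnorm2 (y - x).
Proof.
move=> dh K0 lip x y.
set v := y - x; set D := dotp (grad h x) v; set W := K / 2 * sqnorm2 v.
pose psi := fun t : R => h (x + t *: v) - (0 + D * t + W * t ^+ 2).
have dpsi : forall s : R, is_derive s (1:R) psi ('d h (x + s *: v) v - (D + 2 * W * s)).
  move=> s; have H := is_deriveB (line_derive (h:=h) (p:=x) (w:=v) (s:=s) (dh _)) (quad_derive 0 D W s).
  have -> : psi = (fun t : R => h (x + t *: v)) - (fun t : R => 0 + D * t + W * t ^+ 2).
    by rewrite funeqE.
  exact: H.
have cont : {within `[0, 1], continuous psi}.
  apply: continuous_subspaceT => s.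
  apply: differentiable_continuous; apply/derivable1_diffP.
  by case: (dpsi s).
have [c c01 E] := MVT ltr01 (fun s _ => dpsi s) cont.
have c0 : 0 < c by rewrite (itvP c01).
have le0 : 'd h (x + c *: v) v - (D + 2 * W * c) <= 0.
  rewrite diff_dotp /D opprD addrA -dotpBl subr_le0.
  apply: le_trans (CS _ _) _.
  have := lip (x + c *: v) x.
  have e : x + c *: v - x = c *: v by rewrite addrC addKr.
  rewrite e norm2Z gtr0_norm // => H.
  have hv := norm2_ge0 v.
  have H2 := ler_wpM2r hv H.
  apply: le_trans H2 _.
  rewrite /W -norm2_sq.
  have -> : 2 * (K / 2 * norm2 v ^+ 2) * c = K * (c * norm2 v) * norm2 v by field.
  by [].
have : psi 1 <= psi 0.
  by rewrite -subr_le0 E subr0 mulr1.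
have ey : x + v = y by rewrite /v addrC subrK.
rewrite /psi scale1r scale0r addr0 ey.
rewrite mulr1 expr1n mulr1 mulr0 expr0n /= mulr0 !addr0 subr0 -/v -/D -/W.
lra.
Qed.

End Desc.


Section Prox.
Variable R : realType.

Lemma addrBAC n (u w y : 'rV[R]_n) : u + w - y = (u - y) + w.
Proof. by rewrite addrAC. Qed.

Lemma prox_grad n (a : R) (P : 'rV[R]_n -> R) (y u : 'rV[R]_n) :
  (forall v, a * sqnorm2 (u - y) + P u <= a * sqnorm2 (v - y) + P v) ->
  (forall z, differentiable P z) ->
  grad P u = - (2 * a) *: (u - y).
Proof.
move=> min dP; apply/rowP => i; rewrite /grad !mxE.
set w : 'rV[R]_n := delta_mx 0 i.
set B := dotp (u - y) w.
pose psi := fun t : R =>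
  (a * sqnorm2 (u - y) + (2 * a * B) * t + (a * sqnorm2 w) * t ^+ 2) + P (u + t *: w).
have psiE : forall t, psi t = a * sqnorm2 (u + t *: w - y) + P (u + t *: w).
  move=> t; rewrite /psi addrBAC (sqnorm2D (u - y)) sqnorm2Z dotpZr -/B; ring.
have dpsi : forall s : R, is_derive s (1:R) psi
    ((2 * a * B) + 2 * (a * sqnorm2 w) * s + 'd P (u + s *: w) w).
  move=> s; have H := is_deriveD (quad_derive (a * sqnorm2 (u - y)) (2 * a * B) (a * sqnorm2 w) s)
     (line_derive (h:=P) (p:=u) (w:=w) (s:=s) (dP _)).
  have -> : psi = (fun t : R => a * sqnorm2 (u - y) + (2 * a * B) * t + (a * sqnorm2 w) * t ^+ 2)
     + (fun t : R => P (u + t *: w)) by rewrite funeqE.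
  exact: H.
have d0 : is_derive (0:R) (1:R) psi 0.
  apply: (@derive1_at_min _ psi (-1) 1 0).
  - lra.
  - by move=> r _; case: (dpsi r).
  - by rewrite in_itv /= ltrN10 ltr01.
  - move=> r _; rewrite !psiE scale0r addr0; exact: min.
case: d0 => _ E0; case: (dpsi 0) => _ E1.
rewrite E0 mulr0 addr0 scale0r addr0 in E1.
have -> : 'd P u w = - (2 * a * B) by lra.
by rewrite /B dotp_delta !mxE mulNr.
Qed.

End Prox.


Section Glue.
Variable R : realType.

Lemma part1 (U V W : normedModType R) (g : U -> V -> W) (x : U) (c : V) :
  differentiable (fun p : U * V => g p.1 p.2) (x, c) ->
  differentiable (fun u => g u c) x.
Proof.
move=> H.
have -> : (fun u => g u c) = (fun p : U * V => g p.1 p.2) \o (fun u => (u, c)) by [].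
apply: differentiable_comp => //.

Qed.

Lemma part2 (U V W : normedModType R) (g : U -> V -> W) (x : U) (c : V) :
  differentiable (fun p : U * V => g p.1 p.2) (x, c) ->
  differentiable (fun b => g x b) c.
Proof.
move=> H.
have -> : (fun b => g x b) = (fun p : U * V => g p.1 p.2) \o (fun b => (x, b)) by [].
apply: differentiable_comp => //.

Qed.

Lemma grad_comp n k (f : 'rV[R]_k -> R) (g : 'rV[R]_n -> 'rV[R]_k) x :
  differentiable g x -> differentiable f (g x) ->
  grad (fun u => f (g u)) x = mv (jac g x) (grad f (g x)).
Proof.
move=> dg df; apply/rowP => i; rewrite /grad /mv !mxE.
rewrite -[fun u => f (g u)]/(f \o g) diff_comp // /= diff_dotp /dotp.
by apply: eq_bigr => j _; rewrite !mxE mulrC.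
Qed.

Lemma gradD n (a b : 'rV[R]_n -> R) x :
  differentiable a x -> differentiable b x ->
  grad (fun u => a u + b u) x = grad a x + grad b x.
Proof.
move=> da db; apply/rowP => i; rewrite /grad !mxE.
by rewrite -[fun u => a u + b u]/(a + b) diffD.
Qed.

Lemma gradZ n (k : R) (a : 'rV[R]_n -> R) x :
  differentiable a x ->
  grad (fun u => k * a u) x = k *: grad a x.
Proof.
move=> da; apply/rowP => i; rewrite /grad !mxE.
by rewrite -[fun u => k * a u]/(k *: a) diffZ.
Qed.

Lemma gradC n (k : R) x : grad (fun u : 'rV[R]_n => k) x = 0.
Proof.
apply/rowP => i; rewrite /grad !mxE.
by rewrite -[fun u => k]/(cst k) diff_cst.
Qed.

End Glue.


Section Step.
Variable R : realType.

Lemma mv_split n k (J J' : 'M[R]_(n, k)) a b :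
  norm2 (mv J a - mv J' b) <= frob (J - J') * norm2 a + frob J' * norm2 (a - b).
Proof.
have -> : mv J a - mv J' b = mv (J - J') a + mv J' (a - b).
  apply/rowP => i; rewrite !mxE -!sumrB -big_split /=; apply: eq_bigr => j _; rewrite !mxE; ring.
apply: le_trans (norm2_triangle _ _) _.
by apply: lerD; apply: mv_norm.
Qed.

Lemma comp_lip n k (f : 'rV[R]_k -> R) (g : 'rV[R]_n -> 'rV[R]_k) (L G lg Lg Gg : R) :
  (forall x, differentiable f x) -> (forall u, differentiable g u) ->
  0 <= L -> 0 <= G -> 0 <= lg -> 0 <= Lg -> 0 <= Gg ->
  (forall x y, norm2 (grad f x - grad f y) <= L * norm2 (x - y)) ->
  (forall x, norm2 (grad f x) <= G) ->
  (forall x y, norm2 (g x - g y) <= lg * norm2 (x - y)) ->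
  (forall x y, frob (jac g x - jac g y) <= Lg * norm2 (x - y)) ->
  (forall x, frob (jac g x) <= Gg) ->
  forall x y, norm2 (grad (fun u => f (g u)) x - grad (fun u => f (g u)) y)
    <= (G * Lg + Gg * L * lg) * norm2 (x - y).
Proof.
move=> df dg L0 G0 lg0 Lg0 Gg0 Hlip HG Hg Hjac Hfrob x y.
rewrite (grad_comp (dg x) (df _)) (grad_comp (dg y) (df _)).
apply: le_trans (mv_split _ _ _ _) _.
have h1 : frob (jac g x - jac g y) * norm2 (grad f (g x)) <= (Lg * norm2 (x - y)) * G.
  by apply: ler_pM; [exact: frob_ge0 | exact: norm2_ge0 | exact: Hjac | exact: HG].
have h2 : frob (jac g y) * norm2 (grad f (g x) - grad f (g y)) <= Gg * (L * (lg * norm2 (x - y))).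
  apply: ler_pM; [exact: frob_ge0 | exact: norm2_ge0 | exact: Hfrob | ].
  apply: le_trans (Hlip _ _) _.
  by apply: ler_wpM2l => //; exact: Hg.
lra.
Qed.

Lemma vec_id n (a b d : 'rV[R]_n) (K e : R) :
  2 * K * e = 1 -> a + - (2 * K) *: (d + e *: b) = (a - b) + - (2 * K) *: d.
Proof.
move=> ke; apply/rowP => i; rewrite !mxE.
have -> : - (2 * K) * (d 0 i + e * b 0 i) = - (2 * K) * d 0 i - (2 * K * e) * b 0 i by ring.
rewrite ke; ring.
Qed.

Lemma step n (h P : 'rV[R]_n -> R) (K eta : R) (g x0 x1 : 'rV[R]_n) :
  0 < K -> eta = 1 / (2 * K) ->
  (forall z, differentiable h z) -> (forall z, differentiable P z) ->
  (forall x y, norm2 (grad h x - grad h y) <= K * norm2 (x - y)) ->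
  g = grad h x0 ->
  is_prox eta P (x0 - eta *: g) x1 ->
  h x1 + P x1 <= h x0 + P x0 - K / 2 * sqnorm2 (x1 - x0) /\
  sqnorm2 (grad (fun u => h u + P u) x1) <= 9 * K ^+ 2 * sqnorm2 (x1 - x0).
Proof.
move=> K0 eE dh dP lip gE pr.
have Kn0 : K != 0 by rewrite gt_eqF.
have a_eq : 1 / (2 * eta) = K by rewrite eE; field.
have ke : 2 * K * eta = 1 by rewrite eE; field.
rewrite /is_prox a_eq in pr.
have gP := prox_grad pr dP.
have e1 : x1 - (x0 - eta *: g) = (x1 - x0) + eta *: g.
  by apply/rowP => i; rewrite !mxE; ring.
have e0 : x0 - (x0 - eta *: g) = eta *: g.
  by apply/rowP => i; rewrite !mxE; ring.
have des := descent dh (ltW K0) lip x0 x1.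
rewrite -gE in des.
split.
  have := pr x0; rewrite e1 e0 sqnorm2D sqnorm2Z dotpZr (dotpC (x1 - x0)).
  move: des; move: (dotp g (x1 - x0)) (sqnorm2 (x1 - x0)) (sqnorm2 g) => D S1 S2 des.
  have -> : K * (S1 + 2 * (eta * D) + eta ^+ 2 * S2) =
     K * S1 + D + K * (eta ^+ 2 * S2).
    by rewrite eE; field.
  lra.
rewrite (gradD (dh x1) (dP x1)) gP e1.
have -> : grad h x1 + - (2 * K) *: (x1 - x0 + eta *: g) =
   (grad h x1 - grad h x0) + (- (2 * K)) *: (x1 - x0).
  by rewrite gE; apply: vec_id.
have hn : norm2 ((grad h x1 - grad h x0) + (- (2 * K)) *: (x1 - x0)) <= 3 * K * norm2 (x1 - x0).
  apply: le_trans (norm2_triangle _ _) _.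
  rewrite norm2Z normrN gtr0_norm ?mulr_gt0 //.
  have := lip x1 x0; lra.
rewrite -norm2_sq -(norm2_sq (x1 - x0)).
have := norm2_ge0 ((grad h x1 - grad h x0) + (- (2 * K)) *: (x1 - x0)).
have := norm2_ge0 (x1 - x0).
move: hn; move: (norm2 ((grad h x1 - grad h x0) + (- (2 * K)) *: (x1 - x0))) (norm2 (x1 - x0)) => a b.
nra.
Qed.

End Step.


Section Dfun.
Variable R : realType.
Variable n : nat.

Lemma dD (a b : 'rV[R]_n -> R) x :
  differentiable a x -> differentiable b x -> differentiable (fun u => a u + b u) x.
Proof. by move=> da db; rewrite -[fun u => a u + b u]/(a + b); apply: differentiableD. Qed.

Lemma dZ (k : R) (a : 'rV[R]_n -> R) x :
  differentiable a x -> differentiable (fun u => k * a u) x.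
Proof. by move=> da; rewrite -[fun u => k * a u]/(k *: a); apply: differentiableZ. Qed.

Lemma dC k (f : 'rV[R]_k -> R) (g : 'rV[R]_n -> 'rV[R]_k) x :
  differentiable g x -> differentiable f (g x) -> differentiable (fun u => f (g u)) x.
Proof. by move=> dg df; rewrite -[fun u => f (g u)]/(f \o g); apply: differentiable_comp. Qed.

Lemma dK (k : R) x : differentiable (fun u : 'rV[R]_n => k) x.
Proof. exact: differentiable_cst. Qed.

Lemma vecDB (a b c e : 'rV[R]_n) : (a + b) - (c + e) = (a - c) + (b - e).
Proof. by apply/rowP => i; rewrite !mxE; ring. Qed.

Lemma gradKD (k : R) (b : 'rV[R]_n -> R) x :
  differentiable b x -> grad (fun u => k + b u) x = grad b x.
Proof.
move=> db; rewrite (gradD (dK k x) db) (gradC k x).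
by apply/rowP => i; rewrite !mxE add0r.
Qed.

End Dfun.


Unset Implicit Arguments. Set Strict Implicit.
Local Close Scope classical_set_scope.

Lemma finish_step (R : realType) (K F0 F1 s q : R) :
  0 < K -> 0 <= s -> F1 <= F0 - K / 2 * s -> q <= 9 * K ^+ 2 * s ->
  q <= 18 * K * (F0 - F1) /\ 0 <= F0 - F1.
Proof.
move=> K0 s0 h1 h2; split; last first.
  have : 0 <= K / 2 * s by apply: mulr_ge0 => //; apply: divr_ge0 => //; apply: ltW.
  lra.
apply: le_trans h2 _.
have -> : 9 * K ^+ 2 * s = 18 * K * (K / 2 * s) by field.
apply: ler_wpM2l; first by apply: mulr_ge0 => //; apply: ltW.
lra.
Qed.

Lemma combine (R : realType) (A B M X Y a b c : R) :
  0 < A -> 0 < B -> 2 * A <= M -> 2 * B <= M ->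
  X <= 18 * A * (a - b) -> 0 <= a - b -> Y <= 18 * B * (b - c) -> 0 <= b - c ->
  X + Y <= 9 * M * (a - c).
Proof.
move=> A0 B0 hA hB hX hab hY hbc.
have h1 : 18 * A * (a - b) <= 9 * M * (a - b) by apply: ler_wpM2r => //; lra.
have h2 : 18 * B * (b - c) <= 9 * M * (b - c) by apply: ler_wpM2r => //; lra.
lra.
Qed.

Lemma final (R : realType) (S D M N t : R) :
  0 < t -> 0 < N -> N <= M -> 0 <= S -> S <= 9 * M * D ->
  1 / t * S <= 9 * (M ^+ 2 * D / (N * t)).
Proof.
move=> t0 N0 NM S0 SD.
have M0 : 0 < M by lra.
have D0 : 0 <= D.
  have : 0 <= 9 * M * D by lra.
  by rewrite pmulr_rge0 // mulr_gt0.
have E : 9 * (M ^+ 2 * D / (N * t)) = 1 / t * (9 * M * D) + 9 * M * D * (M - N) / (N * t).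
  by field; rewrite !gt_eqF.
rewrite E.
have h1 : 1 / t * S <= 1 / t * (9 * M * D).
  by apply: ler_wpM2l => //; rewrite divr_ge0 // ltW.
have h2 : 0 <= 9 * M * D * (M - N) / (N * t).
  apply: divr_ge0; last by rewrite ltW // mulr_gt0.
  apply: mulr_ge0; last by lra.
  by apply: mulr_ge0 => //; lra.
lra.
Qed.

Theorem theorem1 :
  exists C : nat, forall (R : realType) (d m : nat)
    (f : 'rV[R]_d -> R) (Q : 'rV[R]_d -> 'rV[R]_m -> 'rV[R]_d)
    (Rg : 'rV[R]_d -> 'rV[R]_m -> R) (lam : R)
    (L G lQ1 LQ1 lQ2 LQ2 GQ1 GQ2 : R),
    (* standing differentiability assumptions *)
    (forall x : 'rV[R]_d, differentiable f x) ->
    (forall (x : 'rV[R]_d) (c : 'rV[R]_m),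
        differentiable (fun p : 'rV[R]_d * 'rV[R]_m => Q p.1 p.2) (x, c)) ->
    (forall (x : 'rV[R]_d) (c : 'rV[R]_m),
        differentiable (fun p : 'rV[R]_d * 'rV[R]_m => Rg p.1 p.2) (x, c)) ->
    (* constants *)
    0 <= L -> 0 <= G -> 0 <= lQ1 -> 0 <= LQ1 -> 0 <= lQ2 -> 0 <= LQ2 ->
    0 <= GQ1 -> 0 <= GQ2 ->
    0 < L + G * LQ1 + GQ1 * L * lQ1 ->
    0 < G * LQ2 + GQ2 * L * lQ2 ->
    (* (A.2) *)
    L_smooth L f ->
    (* (A.3) *)
    (forall x, norm2 (grad f x) <= G) ->
    (* (A.4) *)
    (forall c x y, norm2 (Q x c - Q y c) <= lQ1 * norm2 (x - y)) ->
    (forall c x y, frob (jac (fun u => Q u c) x - jac (fun u => Q u c) y)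
                     <= LQ1 * norm2 (x - y)) ->
    (forall x c c', norm2 (Q x c - Q x c') <= lQ2 * norm2 (c - c')) ->
    (forall x c c', frob (jac (fun b => Q x b) c - jac (fun b => Q x b) c')
                     <= LQ2 * norm2 (c - c')) ->
    (* (A.5) *)
    (forall x c, frob (jac (fun u => Q u c) x) <= GQ1) ->
    (forall x c, frob (jac (fun b => Q x b) c) <= GQ2) ->
    forall (T : nat) (xs : nat -> 'rV[R]_d) (cs : nat -> 'rV[R]_m),
    (0 < T)%N ->
    let eta1 := 1 / (2 * (L + G * LQ1 + GQ1 * L * lQ1)) in
    let eta2 := 1 / (2 * (G * LQ2 + GQ2 * L * lQ2)) in
    (* the alternating proximal algorithm, iterations t = 0, ..., T-1 *)
    (forall t : nat, (t < T)%N ->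
       let g := grad f (xs t) + grad (fun u => f (Q u (cs t))) (xs t) in
       is_prox eta1 (fun u => lam * Rg u (cs t)) (xs t - eta1 *: g) (xs t.+1) /\
       let h := grad (fun b => f (Q (xs t.+1) b)) (cs t) in
       is_prox eta2 (fun b => lam * Rg (xs t.+1) b) (cs t - eta2 *: h) (cs t.+1)) ->
    let F := F_lam f Q Rg lam in
    let Lmin := Num.min (1 / eta1) (1 / eta2) in
    let Lmax := Num.max (1 / eta1) (1 / eta2) in
    1 / T%:R * \sum_(t < T)
        (sqnorm2 (grad (fun u => F u (cs t)) (xs t.+1))
         + sqnorm2 (grad (fun b => F (xs t.+1) b) (cs t.+1)))
      <= C%:R * (Lmax ^+ 2 * (F (xs 0%N) (cs 0%N) - F (xs T) (cs T)) / (Lmin * T%:R)).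
Proof.
exists 9%N.
move=> R d m f Q Rg lam L G lQ1 LQ1 lQ2 LQ2 GQ1 GQ2 df dQ dR L0 G0 lQ10 LQ10 lQ20 LQ20
  GQ10 GQ20 A0 B0 [Lip _] HG Q1 J1 Q2 J2 F1 F2 T xs cs T0 eta1 eta2 alg.
cbv zeta.
pose A := L + G * LQ1 + GQ1 * L * lQ1.
pose B := G * LQ2 + GQ2 * L * lQ2.
have dQ1 : forall c x, differentiable (fun u => Q u c) x.
  by move=> c x; apply: (part1 (g := Q)); exact: dQ.
have dQ2 : forall x c, differentiable (fun b => Q x b) c.
  by move=> x c; apply: (part2 (g := Q)); exact: dQ.
have dR1 : forall c x, differentiable (fun u => Rg u c) x.
  by move=> c x; apply: (part1 (g := Rg)); exact: dR.
have dR2 : forall x c, differentiable (fun b => Rg x b) c.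
  by move=> x c; apply: (part2 (g := Rg)); exact: dR.
have dfQ1 : forall c x, differentiable (fun u => f (Q u c)) x.
  by move=> c x; apply: dC; [exact: dQ1 | exact: df].
have dfQ2 : forall x c, differentiable (fun b => f (Q x b)) c.
  by move=> x c; apply: dC; [exact: dQ2 | exact: df].
have keyx : forall t, (t < T)%N ->
  sqnorm2 (grad ((F_lam f Q Rg lam)^~ (cs t)) (xs t.+1))
    <= 18 * A * (F_lam f Q Rg lam (xs t) (cs t) - F_lam f Q Rg lam (xs t.+1) (cs t)) /\
  0 <= F_lam f Q Rg lam (xs t) (cs t) - F_lam f Q Rg lam (xs t.+1) (cs t).
  move=> t Ht; have [px _] := alg t Ht.
  have lip : forall x y, norm2 (grad (fun u => f u + f (Q u (cs t))) x
        - grad (fun u => f u + f (Q u (cs t))) y) <= A * norm2 (x - y).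
    move=> x y; rewrite (gradD (df x) (dfQ1 _ x)) (gradD (df y) (dfQ1 _ y)) vecDB.
    apply: le_trans (norm2_triangle _ _) _.
    have h1 := Lip x y.
    have h2 := comp_lip (g := fun u => Q u (cs t)) df (dQ1 _) L0 G0 lQ10 LQ10 GQ10 Lip HG
      (fun x y => Q1 _ x y) (fun x y => J1 _ x y) (fun x => F1 x _) x y.
    apply: le_trans (lerD h1 h2) _; rewrite -mulrDl addrA; exact: lexx.
  have gE : grad f (xs t) + grad (fun u => f (Q u (cs t))) (xs t)
      = grad (fun u => f u + f (Q u (cs t))) (xs t).
    by rewrite (gradD (df _) (dfQ1 _ _)).
  have [S1 S2] := step (h := fun u => f u + f (Q u (cs t))) (P := fun u => lam * Rg u (cs t))
    (K := A) (eta := eta1) A0 erefl (fun z => dD (df z) (dfQ1 _ z))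
    (fun z => dZ lam (dR1 _ z)) lip gE px.
  exact (@finish_step R _ _ _ _ _ A0 (sqnorm2_ge0 _) S1 S2).
have keyc : forall t, (t < T)%N ->
  sqnorm2 (grad (F_lam f Q Rg lam (xs t.+1)) (cs t.+1))
    <= 18 * B * (F_lam f Q Rg lam (xs t.+1) (cs t) - F_lam f Q Rg lam (xs t.+1) (cs t.+1)) /\
  0 <= F_lam f Q Rg lam (xs t.+1) (cs t) - F_lam f Q Rg lam (xs t.+1) (cs t.+1).
  move=> t Ht; have [_ pc] := alg t Ht.
  have lip : forall x y, norm2 (grad (fun b => f (xs t.+1) + f (Q (xs t.+1) b)) x
        - grad (fun b => f (xs t.+1) + f (Q (xs t.+1) b)) y) <= B * norm2 (x - y).
    move=> x y.
    rewrite (gradKD (f (xs t.+1)) (dfQ2 _ x)).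
    rewrite (gradKD (f (xs t.+1)) (dfQ2 _ y)).
    exact: (comp_lip (g := fun b => Q (xs t.+1) b) df (dQ2 _) L0 G0 lQ20 LQ20 GQ20 Lip HG
      (fun x y => Q2 _ x y) (fun x y => J2 _ x y) (fun c => F2 _ c) x y).
  have gE : grad (fun b => f (Q (xs t.+1) b)) (cs t)
      = grad (fun b => f (xs t.+1) + f (Q (xs t.+1) b)) (cs t).
    by rewrite (gradKD (f (xs t.+1)) (dfQ2 _ _)).
  have [S1 S2] := step (h := fun b => f (xs t.+1) + f (Q (xs t.+1) b))
    (P := fun b => lam * Rg (xs t.+1) b)
    (K := B) (eta := eta2) B0 erefl (fun z => dD (dK _ z) (dfQ2 _ z))
    (fun z => dZ lam (dR2 _ z)) lip gE pc.
  exact (@finish_step R _ _ _ _ _ B0 (sqnorm2_ge0 _) S1 S2).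
have E1 : 1 / eta1 = 2 * A by rewrite /eta1 !div1r invrK.
have E2 : 1 / eta2 = 2 * B by rewrite /eta2 !div1r invrK.
rewrite E1 E2.
have hA : 2 * A <= Num.max (2 * A) (2 * B) by rewrite le_max lexx.
have hB : 2 * B <= Num.max (2 * A) (2 * B) by rewrite le_max lexx orbT.
have hN : 0 < Num.min (2 * A) (2 * B) by rewrite lt_min !mulr_gt0.
have hNM : Num.min (2 * A) (2 * B) <= Num.max (2 * A) (2 * B).
  by apply: le_trans hA; rewrite ge_min lexx.
move: hA hB hN hNM.
move: (Num.max (2 * A) (2 * B)) (Num.min (2 * A) (2 * B)) => M N hA hB hN hNM.
pose a := fun t => F_lam f Q Rg lam (xs t) (cs t).
have hsum : \sum_(t < T)
     (sqnorm2 (grad ((F_lam f Q Rg lam)^~ (cs t)) (xs t.+1)) +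
      sqnorm2 (grad (F_lam f Q Rg lam (xs t.+1)) (cs t.+1)))
   <= \sum_(t < T) 9 * M * (a t - a t.+1).
  apply: ler_sum => -[t Ht] _ /=.
  have [X1 X2] := keyx t Ht; have [Y1 Y2] := keyc t Ht.
  exact (@combine R _ _ _ _ _ _ _ _ A0 B0 hA hB X1 X2 Y1 Y2).
have tel : \sum_(t < T) 9 * M * (a t - a t.+1) = 9 * M * (a 0%N - a T).
  rewrite -mulr_sumr -(big_mkord xpredT (fun t => a t - a t.+1)).
  have -> : \sum_(0 <= t < T) (a t - a t.+1) = - \sum_(0 <= t < T) (a t.+1 - a t).
    by rewrite -sumrN; apply: eq_bigr => i _; rewrite opprB.
  by rewrite telescope_sumr // opprB.
rewrite tel in hsum.
have S0 : 0 <= \sum_(t < T)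
     (sqnorm2 (grad ((F_lam f Q Rg lam)^~ (cs t)) (xs t.+1)) +
      sqnorm2 (grad (F_lam f Q Rg lam (xs t.+1)) (cs t.+1))).
  by apply: sumr_ge0 => t _; apply: addr_ge0; apply: sqnorm2_ge0.
have Tp : 0 < T%:R :> R by rewrite ltr0n.
exact (@final R _ _ M N T%:R Tp hN hNM S0 hsum).
Qed.
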